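(* Let $P,Q$ be probability measures on $(\mathcal X,\mathcal F)$ with $P\ll Q$, let $\psi$ be an Orlicz function, and let $E\in\mathcal F$. Then for every $\gamma\in\mathbb R$, $$P(E)\le \gamma\,Q(E)+\frac{1}{\psi^{-1}(1/Q(E))}\cdot\Big\Vert\Big[\frac{\mathrm dP}{\mathrm dQ}-\gamma\Big]_+\Big\Vert^{A,Q}_{\psi^\star}.$$
   Context: An Orlicz function is a convex $\psi:[0,\infty)\to[0,\infty]$ with $\psi(0)=0$ that is not identically $0$ or identically $\infty$ on $(0,\infty)$. Its conjugate is $\psi^\star(t):=\sup_{\lambda>0}(\lambda t-\psi(\lambda))$, and its generalized inverse is $\psi^{-1}(s):=\inf\{t\ge0:\psi(t)\ge s\}$ for $s\ge0$, with conventions $1/0=\infty$, $\psi^{-1}(\infty)=\infty$, $1/\infty=0$. For a probability measure $\mu$ and measurable $U$, the Luxemburg norm is $\Vert U\Vert^\mu_\psi:=\inf\{\sigma>0:\mathbf E_\mu[\psi(|U|/\sigma)]\le1\}$ and the Amemiya norm is $\Vert U\Vert^{A,\mu}_\psi:=\inf\{(\mathbf E_\mu[\psi(t|U|)]+1)/t:\ t>0\}$. $[x]_+:=\max\{x,0\}$. *)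

(* Defs.v *)
From HB Require Import structures.
From mathcomp Require Import all_boot all_order all_algebra.
From mathcomp Require Import all_classical all_reals all_analysis.
Set Implicit Arguments. Unset Strict Implicit. Unset Printing Implicit Defensive.
Import Order.TTheory GRing.Theory Num.Theory.
Local Open Scope classical_set_scope.
Local Open Scope ring_scope.
Local Open Scope ereal_scope.

Section orlicz.
Variable R : realType.

(* Orlicz function psi : [0,oo) -> [0,oo]; only values on [0,oo) matter. *)
Definition orlicz (psi : R -> \bar R) : Prop :=
  [/\ psi 0%R = 0,
      (forall x : R, (0 <= x)%R -> 0 <= psi x),
      (forall x y t : R, (0 <= x)%R -> (0 <= y)%R -> (0 <= t <= 1)%R ->
         psi (t * x + (1 - t) * y)%R <= t%:E * psi x + (1 - t)%:E * psi y),
      (exists x : R, (0 < x)%R /\ psi x != 0) &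
      (exists x : R, (0 < x)%R /\ psi x != +oo)].

Definition orlicz_conj (psi : R -> \bar R) (t : R) : \bar R :=
  ereal_sup [set (l * t)%:E - psi l | l in [set l : R | (0 < l)%R]].

Definition orlicz_inv (psi : R -> \bar R) (s : \bar R) : \bar R :=
  if s == +oo then +oo
  else ereal_inf [set t%:E | t in [set t : R | (0 <= t)%R /\ s <= psi t]].

Definition erecip (x : \bar R) : \bar R :=
  if x == 0 then +oo else if x == +oo then 0 else ((fine x)^-1)%:E.

Definition amemiya_norm d (T : measurableType d) (mu : set T -> \bar R)
    (phi : R -> \bar R) (U : T -> R) : \bar R :=
  ereal_inf [set (\int[mu]_x phi (t * `|U x|)%R + 1) * (t^-1)%:E
            | t in [set t : R | (0 < t)%R]].

End orlicz.

(* Main.v *)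
Require Import Defs.
From HB Require Import structures.
From mathcomp Require Import all_boot all_order all_algebra.
From mathcomp Require Import all_classical all_reals all_analysis.
From mathcomp Require Import ring lra.
From mathcomp Require Import measurable_realfun unstable.
Import Order.TTheory GRing.Theory Num.Theory.
Local Open Scope classical_set_scope.
Local Open Scope ring_scope.
Local Open Scope ereal_scope.

Section helpers.
Variable R : realType.
Variable psi : R -> \bar R.
Hypothesis hpsi : orlicz psi.

Lemma psi_ge0 x : (0 <= x)%R -> 0 <= psi x.
Proof. by case: hpsi => _ h _ _ _; apply: h. Qed.

Lemma psi_scale x l : (0 <= x)%R -> (0 <= l <= 1)%R -> psi (l * x)%R <= l%:E * psi x.
Proof.
move=> x0 l01; case: hpsi => p0 _ hc _ _.
have := hc x 0%R l x0 (lexx _) l01.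
by rewrite mulr0 addr0 p0 mule0 adde0.
Qed.

Lemma psi_mono t s : (0 <= t)%R -> (t <= s)%R -> psi t <= psi s.
Proof.
move=> t0 ts; have s0 : (0 <= s)%R by apply: le_trans ts.
have [sE|sn0] := eqVneq s 0%R.
  by subst s; have -> : t = 0%R by apply/eqP; rewrite eq_le t0 andbT.
have sp : (0 < s)%R by rewrite lt_neqAle eq_sym sn0 s0.
have -> : t = (t / s * s)%R by rewrite divfK.
apply: le_trans; first apply: (@psi_scale s (t / s)%R s0).
  by rewrite divr_ge0 //= ler_pdivrMr // mul1r.
apply: gee_pMl => //; first exact: psi_ge0.
by rewrite lee_fin ler_pdivrMr // mul1r.
Qed.


Lemma psi_small e : (0 < e)%R -> exists l, (0 < l)%R /\ psi l <= e%:E.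
Proof.
move=> e0; case: hpsi => _ _ _ _ [x0 [x0p]].
have := psi_ge0 _ (ltW x0p).
case Ex : (psi x0) => [a| |] //= a0 _; rewrite lee_fin in a0.
have ae : (0 < a + e)%R by lra.
exists (e / (a + e) * x0)%R; split; first by rewrite mulr_gt0 // divr_gt0.
apply: le_trans; first apply: (@psi_scale x0 (e / (a + e))%R (ltW x0p)).
  by rewrite divr_ge0 ?(ltW e0) ?(ltW ae) //= ler_pdivrMr // mul1r; lra.
rewrite Ex -EFinM lee_fin mulrAC ler_pdivrMr // ler_pM2l //; lra.
Qed.

Lemma young l u : (0 < l)%R -> ((l * u)%:E - psi l) <= orlicz_conj psi u.
Proof. by move=> l0; apply: ereal_sup_ubound; exists l. Qed.

Lemma conj_ge0 u : (0 <= u)%R -> 0 <= orlicz_conj psi u.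
Proof.
move=> u0; apply/lee_addgt0Pr => e e0.
have [l [l0 hl]] := @psi_small e e0.
have := @young l u l0.
have := psi_ge0 _ (ltW l0).
move: hl; case: (psi l) => [p| |] //= pe p0; rewrite ?lee_fin in pe p0.
case: (orlicz_conj psi u) => [c| |] //=; last by move=> _; rewrite addye // leey.
rewrite -EFinD !lee_fin => h.
have : (0 <= l * u)%R by rewrite mulr_ge0 // ltW.
lra.
Qed.

Lemma psi_unbounded M : exists t, (0 <= t)%R /\ M%:E <= psi t.
Proof.
case: hpsi => _ _ _ [x1 [x1p hx1]] _.
move: hx1; have := psi_ge0 _ (ltW x1p).
case Ex : (psi x1) => [b| |] //= b0 bn0; last first.
  by exists x1; split; [exact: ltW | rewrite Ex leey].
rewrite lee_fin in b0.
have bp : (0 < b)%R by rewrite lt_neqAle b0 andbT; apply: contraNneq bn0 => <-.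
set k := (`|M| / b + 1)%R.
have k1 : (1 <= k)%R by rewrite /k lerDr divr_ge0 // ltW.
have kp : (0 < k)%R by apply: lt_le_trans k1.
exists (k * x1)%R; split; first by rewrite mulr_ge0 // ltW.
have := @psi_scale (k * x1)%R (k^-1)%R (mulr_ge0 (ltW kp) (ltW x1p)).
rewrite mulrA mulVf ?gt_eqF // mul1r Ex.
have kk : (0 <= k^-1 <= 1)%R by rewrite invr_ge0 (ltW kp) /= invf_le1.
move=> /(_ kk).
have := psi_ge0 _ (mulr_ge0 (ltW kp) (ltW x1p)).
case: (psi (k * x1)%R) => [p| |] //=; last by move=> *; rewrite leey.
rewrite -EFinM !lee_fin => p0.
rewrite mulrC ler_pdivlMr // => h.
apply: le_trans h.
rewrite /k mulrDr mulr1 mulrCA mulfV ?gt_eqF // mulr1.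
have := ler_norm M; lra.
Qed.

End helpers.

Section more.
Variable R : realType.

Lemma le_integral_nm d (T : measurableType d) (mu : measure T R) D
  (f1 f2 : T -> \bar R) :
  (forall x, D x -> 0 <= f1 x) -> (forall x, D x -> f1 x <= f2 x) ->
  \int[mu]_(x in D) f1 x <= \int[mu]_(x in D) f2 x.
Proof.
move=> f10 f12.
have f20 : forall x, D x -> 0 <= f2 x by move=> x Dx; exact: le_trans (f10 _ Dx) (f12 _ Dx).
rewrite (ge0_integralE _ f10) (ge0_integralE _ f20) /=.
apply: le_ereal_sup => _ [h hf <-]; exists h => //= x.
exact: le_trans (hf x) (lee_restrict f12 x).
Qed.

Lemma le_integral_setT d (T : measurableType d) (mu : measure T R) D
  (f : T -> \bar R) : (forall x, 0 <= f x) ->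
  \int[mu]_(x in D) f x <= \int[mu]_x f x.
Proof.
move=> f0; rewrite (integral_mkcond D).
apply: le_integral_nm => x _; first by rewrite /patch; case: ifP.
by rewrite /patch; case: ifP.
Qed.

Lemma erecip0 : erecip (0 : \bar R) = +oo.
Proof. by rewrite /erecip eqxx. Qed.

Lemma erecipy : erecip (+oo : \bar R) = 0.
Proof. by rewrite /erecip. Qed.

Lemma erecipr (r : R) : r != 0%R -> erecip r%:E = (r^-1)%:E.
Proof. by move=> r0; rewrite /erecip eqe (negbTE r0). Qed.

End more.

(* f is (a version of) the Radon-Nikodym derivative dP/dQ *)
Theorem theorem2 (R : realType) (d : measure_display) (T : measurableType d)
  (P Q : probability T R) (f : T -> R) (psi : R -> \bar R) (E : set T)
  (gamma : R) :
  P `<< Q ->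
  measurable_fun setT f -> (forall x, (0 <= f x)%R) ->
  (forall A, measurable A -> P A = \int[Q]_(x in A) (f x)%:E) ->
  orlicz psi -> measurable E ->
  P E <= gamma%:E * Q E
         + erecip (orlicz_inv psi (erecip (Q E)))
           * amemiya_norm Q (orlicz_conj psi) (fun x => Num.max (f x - gamma) 0)%R.
Proof.
move=> PQ mf f0 hPf hpsi mE.
pose g : T -> R := (fun x => Num.max (f x - gamma) 0)%R.
set A := amemiya_norm _ _ _.
have mfE : measurable_fun E f by apply: measurable_funS mf => //.
have mgE : measurable_fun E g.
  apply: measurable_realfun.measurable_maxr; last exact: measurable_cst.
  by apply: measurable_realfun.measurable_funB => //; exact: measurable_cst.
have mgEE : measurable_fun E (EFin \o g) by apply/measurable_realfun.measurable_EFinP.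
have mfEE : measurable_fun E (EFin \o f) by apply/measurable_realfun.measurable_EFinP.
have g0 x : (0 <= g x)%R by rewrite /g le_max lexx orbT.
set v := \int[Q]_(x in E) (g x)%:E.
have v0 : 0 <= v by apply: integral_ge0 => x _; rewrite lee_fin.
have vdef : v = \int[Q]_(x in E) (g x)%:E by [].
clearbody v.
set q := fine (Q E).
have QEq : Q E = q%:E by rewrite /q fineK // fin_num_measure.
have q0 : (0 <= q)%R by rewrite -lee_fin -QEq measure_ge0.
have step1 : P E <= gamma%:E * Q E + v.
  rewrite hPf //.
  have [ga0|gan] := leP 0%R gamma.
  { rewrite vdef; apply: (@le_trans _ _ (\int[Q]_(x in E) ((gamma%:E) + (g x)%:E))).
      apply: ge0_le_integral => //.
      - by move=> x _; rewrite lee_fin.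
      - by apply: emeasurable_funD => //; exact: measurable_cst.
      - by move=> x _; rewrite -EFinD lee_fin /g -lerBlDl le_max lexx.
    rewrite ge0_integralD //; first by rewrite integral_cst.
    all: try exact: measurable_cst.
    all: by move=> x _; exact: (g0 x). }
  have -> : v = \int[Q]_(x in E) (f x)%:E + (- gamma)%:E * Q E.
  { rewrite vdef -integral_cst // -ge0_integralD //.
    - apply: eq_integral => x _; rewrite -EFinD /g max_l //.
      by have := f0 x; lra.
    all: try exact: measurable_cst.
    all: move=> x _; first [exact: (f0 x) | by have h : (0 <= - gamma)%R by lra; exact: h]. }
  rewrite QEq -!EFinM addeCA -EFinD mulNr addrN adde0 //.
have [qE0|qn0] := eqVneq q 0%R.
  rewrite QEq qE0 erecip0 /orlicz_inv eqxx erecipy mul0e mule0 adde0.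
  have hQ : Q.-null_set E.
    move=> B mB BE; apply/eqP; rewrite eq_le measure_ge0 andbT.
    apply: (@le_trans _ _ (Q E)); last by rewrite QEq qE0.
    by apply: le_measure => //; rewrite inE.
  by rewrite (PQ E hQ E mE (@subset_refl _ E)).
apply: le_trans step1 _; apply: leeD2l.
have qp : (0 < q)%R by rewrite lt_neqAle eq_sym qn0 q0.
have qip : (0 < q^-1)%R by rewrite invr_gt0.
rewrite QEq erecipr // /orlicz_inv.
have -> : ((q^-1)%:E == +oo) = false by [].
set S := [set _%:E | _ in _].
have [s0 [s0p hs0]] : exists s0, (0 < s0)%R /\ psi s0 < (q^-1)%:E.
  have [l [lp hl]] := @psi_small R psi hpsi (q^-1 / 2)%R ltac:(by rewrite divr_gt0).
  by exists l; split => //; apply: le_lt_trans hl _; rewrite lte_fin; lra.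
have cs0 : s0%:E <= ereal_inf S.
  apply: le_ereal_inf_tmp => _ [t [t0 ht] <-]; rewrite lee_fin leNgt; apply/negP => ts.
  have h := @psi_mono R psi hpsi t s0 t0 (ltW ts).
  by have := lt_le_trans (le_lt_trans h hs0) ht; rewrite ltxx.
have [t1 [t10 ht1]] := @psi_unbounded R psi hpsi (q^-1)%R.
have ct1 : ereal_inf S <= t1%:E by apply: ereal_inf_lbound; exists t1.
have [c0 [Ec sc0]] : exists c0, ereal_inf S = c0%:E /\ (s0 <= c0)%R.
  by move: cs0 ct1; case: (ereal_inf S) => [c0| |] //= h _; exists c0.
have c0p : (0 < c0)%R by apply: lt_le_trans sc0.
rewrite Ec erecipr ?gt_eqF //.
have bound : forall s, (0 < s)%R -> (s < c0)%R -> psi s < (q^-1)%:E.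
  move=> s sp sc; rewrite ltNge; apply/negP => h.
  have : ereal_inf S <= s%:E by apply: ereal_inf_lbound; exists s => //; split => //; exact: ltW.
  by rewrite Ec lee_fin leNgt sc.
have key : forall s, (0 < s)%R -> psi s < (q^-1)%:E -> v * s%:E <= A.
  move=> s sp hs; rewrite /A /amemiya_norm; apply: le_ereal_inf_tmp => _ [t tp <-].
  have := @psi_ge0 R psi hpsi s (ltW sp).
  move: hs; case Eps: (psi s) => [p| |] //=; rewrite lte_fin lee_fin => pq p0.
  set J := (\int[Q]_x _).
  pose h : T -> R := fun x => Num.max (s * t * g x - p)%R 0%R.
  have mh : measurable_fun E (EFin \o h).
    apply/measurable_EFinP; apply: measurable_maxr; last exact: measurable_cst.
    apply: measurable_funB; last exact: measurable_cst.
    by apply: measurable_funM => //; exact: measurable_cst.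
  have h0 x : (0 <= h x)%R by rewrite /h le_max lexx orbT.
  have stp : (0 <= s * t)%R by rewrite mulr_ge0 // ltW.
  have hle : (s * t)%:E * v <= J + (p * q)%:E.
    rewrite vdef -ge0_integralZl_EFin //; last first.
      by move=> x _; exact: (g0 x).
    apply: (@le_trans _ _ (\int[Q]_(x in E) ((h x)%:E + p%:E))).
      apply: ge0_le_integral => //.
      - by move=> x _; apply: mule_ge0; [exact: stp | exact: (g0 x)].
      - by apply: emeasurable_funM => //; exact: measurable_cst.
      - by apply: emeasurable_funD => //; exact: measurable_cst.
      - move=> x _; rewrite -EFinM -EFinD lee_fin -lerBlDr /h le_max lexx //.
    rewrite ge0_integralD //.
    all: try (by move=> x _; first [exact: (h0 x) | exact: p0]).
    all: try exact: measurable_cst.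
    rewrite integral_cst // (_ : p%:E * Q E = (p * q)%:E); last by rewrite EFinM QEq.
    apply: leeD2r.
    apply: (le_trans _ (@le_integral_setT R d T Q E _ _)); last first.
      move=> x; apply: (@conj_ge0 R psi hpsi); rewrite mulr_ge0 // ltW //.
    apply: le_integral_nm => x _; first exact: (h0 x).
    rewrite (ger0_norm (g0 x)) /h -/(g x).
    case: (leP (s * t * g x - p)%R 0%R) => _.
      by apply: (@conj_ge0 R psi hpsi); rewrite mulr_ge0 // ltW.
    have := @young R psi s (t * g x)%R sp.
    by rewrite Eps mulrA EFinB.
  have pq1 : ((p * q)%:E <= 1).
    by rewrite lee_fin -ler_pdivlMr // div1r ltW.
  have h2 := le_trans hle (leeD2l J pq1).
  have tip : (0 <= (t^-1)%:E) by rewrite lee_fin invr_ge0 ltW.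
  have := lee_wpmul2l tip h2.
  have e1 : (t^-1 * (s * t) = s)%R by rewrite mulrCA mulVf ?gt_eqF // mulr1.
  rewrite muleA -EFinM e1 => H.
  by rewrite muleC (muleC (J + 1)).
clearbody A; clear vdef.
have shp : (0 < c0 / 2)%R by rewrite divr_gt0.
have shc : (c0 / 2 < c0)%R by lra.
have k2 := key _ shp (bound _ shp shc).
case: A key k2 => [a| |] key k2; last 2 first.
- by rewrite gt0_muley ?lte_fin ?invr_gt0 // leey.
- have := le_trans (mule_ge0 v0 (ltW shp : (0 <= (c0/2)%:E))) k2.
  by rewrite leeNy_eq.
move: v key k2 v0 => [w| |] key k2 v0 //=; last first.
  by rewrite gt0_mulye ?lte_fin // in k2.
rewrite -EFinM lee_fin mulrC ler_pdivlMr //.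
rewrite -EFinM lee_fin in k2; rewrite lee_fin in v0.
have a0 : (0 <= a)%R by apply: le_trans k2; rewrite mulr_ge0 // ltW.
apply/ler_ltP => z zlt.
have [z0|z0] := leP z 0%R; first by lra.
have wp : (0 < w)%R by nra.
have sp : (0 < z / w)%R by rewrite divr_gt0.
have sc : (z / w < c0)%R by rewrite ltr_pdivrMr // mulrC.
have := key _ sp (bound _ sp sc).
by rewrite -EFinM lee_fin mulrC divfK ?gt_eqF.
Qed.
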